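(* Let $G=(V,E)$ be an undirected graph (finite or infinite) with $|V|>2$. If $G$ is decomposable and has a color class $\widehat A$ with $\widetilde A=V$, then $G$ has a non-trivial maximal ``strong'' partitive set, i.e. a ``strong'' partitive set $X$ with $|X|\ge2$ and $X\neq V$ which is maximal for inclusion among the ``strong'' partitive sets of $G$ different from $V$.
   Context: A graph $G=(V,E)$ has vertex set $V$ and edge set $E\subseteq V^2$; it is undirected if $E$ is irreflexive and symmetric. A set $X\subseteq V$ is a partitive set of $G$ if for all $a,b\in X$ and $c\in V\setminus X$: $(a,c)\in E\Leftrightarrow(b,c)\in E$ and $(c,a)\in E\Leftrightarrow(c,b)\in E$; $I(G)$ is the class of partitive sets; a partitive set is trivial if it is a singleton or $V$. $G$ is indecomposable if all its partitive sets are trivial, decomposable otherwise. A ``strong'' partitive set is an $X\in I(G)$ such that for every $Y\in I(G)$ with $X\cap Y\neq\emptyset$, $X\subseteq Y$ or $Y\subseteq X$. Implication classes: on $E$ define $(a,b)\Gamma(a',b')$ iff either $a=a'$ and $(b,b')\notin E$, or $b=b'$ and $(a,a')\notin E$; the classes of the transitive closure $\Gamma^*$ are the implication classes. For an implication class $A$, $A^{-1}=\{(b,a):(a,b)\in A\}$ and the color class is $\widehat A=A\cup A^{-1}$; $\widetilde A$ is the set of vertices spanned by $\widehat A$. *)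

(* Defs.v *)
From Stdlib Require Import Relations.

Section Graphs.
Variable V : Type.
Variable E : V -> V -> Prop.

Definition undirected : Prop :=
  (forall x, ~ E x x) /\ (forall x y, E x y -> E y x).

Definition partitive (X : V -> Prop) : Prop :=
  forall a b c, X a -> X b -> ~ X c ->
    (E a c <-> E b c) /\ (E c a <-> E c b).

Definition trivial_set (X : V -> Prop) : Prop :=
  (forall x, ~ X x) \/ (exists x, forall y, X y <-> y = x) \/ (forall x, X x).

Definition decomposable : Prop :=
  exists X, partitive X /\ ~ trivial_set X.

Definition strong_partitive (X : V -> Prop) : Prop :=
  partitive X /\
  forall Y, partitive Y -> (exists x, X x /\ Y x) ->
    (forall x, X x -> Y x) \/ (forall x, Y x -> X x).

Definition Gamma (p q : V * V) : Prop :=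
  E (fst p) (snd p) /\ E (fst q) (snd q) /\
  ((fst p = fst q /\ ~ E (snd p) (snd q)) \/
   (snd p = snd q /\ ~ E (fst p) (fst q))).

Definition impl_class (e : V * V) (p : V * V) : Prop :=
  clos_refl_trans (V * V) Gamma e p.

(* the colour class  A ∪ A^{-1}  of the implication class A of e *)
Definition color_class (e : V * V) (p : V * V) : Prop :=
  impl_class e p \/ impl_class e (snd p, fst p).

Definition spanned (e : V * V) (x : V) : Prop :=
  exists y, color_class e (x, y) \/ color_class e (y, x).

End Graphs.

Arguments undirected {V} E.
Arguments partitive {V} E X.
Arguments trivial_set {V} X.
Arguments decomposable {V} E.
Arguments strong_partitive {V} E X.
Arguments Gamma {V} E p q.
Arguments impl_class {V} E e p.
Arguments color_class {V} E e p.
Arguments spanned {V} E e x.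

(* Main.v *)
Require Import Defs.
From Stdlib Require Import Relations Classical.

Lemma Gamma_sym V (E:V->V->Prop) : undirected E -> forall p q, Gamma E p q -> Gamma E q p.
Proof.
intros [Hirr Hs] [a b] [c d]; unfold Gamma; simpl.
intros [H1 [H2 [[Heq H3]|[Heq H3]]]]; subst; repeat split; auto.
- left; split; auto.
- right; split; auto.
Qed.

Lemma crt_sym {A} (R: relation A) : (forall x y, R x y -> R y x) ->
  forall x y, clos_refl_trans A R x y -> clos_refl_trans A R y x.
Proof.
intros HR x y H; induction H; [apply rt_step; auto | apply rt_refl | eapply rt_trans; eauto].
Qed.

Lemma crt_inv {A} (R: relation A) (I : A -> Prop) : (forall x y, R x y -> I x -> I y) ->
  forall x y, clos_refl_trans A R x y -> I x -> I y.
Proof. intros HI x y H; induction H; eauto. Qed.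

Lemma color_all V E (I : V*V -> Prop) : undirected E ->
  (forall p q, Gamma E p q -> I p -> I q) -> (forall a b, I (a,b) -> I (b,a)) ->
  forall e a b, color_class E e (a,b) -> I (a,b) -> forall c d, color_class E e (c,d) -> I (c,d).
Proof.
intros HU HI Hsw e a b Hab Iab.
assert (HGs : forall x y, Gamma E x y -> Gamma E y x) by (intros; apply Gamma_sym; auto).
assert (Ie : I e).
{ destruct Hab as [H|H]; simpl in H.
  - apply (crt_inv _ I HI (a,b) e); auto. apply crt_sym; auto.
  - apply (crt_inv _ I HI (b,a) e); auto. apply crt_sym; auto. }
intros c d [H|H]; simpl in H.
- exact (crt_inv _ I HI e _ H Ie).
- apply Hsw. exact (crt_inv _ I HI e _ H Ie).
Qed.

Lemma spanned_all V E (I : V*V -> Prop) : undirected E ->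
  (forall p q, Gamma E p q -> I p -> I q) -> (forall a b, I (a,b) -> I (b,a)) ->
  forall e a b, (forall v, spanned E e v) ->
  (color_class E e (a,b) \/ color_class E e (b,a)) -> I (a,b) ->
  forall v, exists w, I (v,w).
Proof.
intros HU HI Hsw e a b Hsp Hc Iab v.
assert (Hc' : exists a' b', color_class E e (a',b') /\ I (a',b')).
{ destruct Hc; [exists a, b | exists b, a]; auto. }
destruct Hc' as [a' [b' [Hc1 I1]]].
destruct (Hsp v) as [w [H|H]]; exists w.
- exact (color_all V E I HU HI Hsw e a' b' Hc1 I1 v w H).
- apply Hsw; exact (color_all V E I HU HI Hsw e a' b' Hc1 I1 w v H).
Qed.

Lemma color_edge V (E : V -> V -> Prop) (e : V*V) (a b : V) : E (fst e) (snd e) -> color_class E e (a,b) -> E a b \/ E b a.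
Proof.
intros He [H|H]; simpl in H.
- left. apply (crt_inv _ (fun p : V*V => E (fst p) (snd p)) ) in H; auto.
  intros x y [_ [H2 _]] _; auto.
- right. apply (crt_inv _ (fun p : V*V => E (fst p) (snd p)) ) in H; auto.
  intros x y [_ [H2 _]] _; auto.
Qed.

Lemma module_full V E (M : V -> Prop) e a b : undirected E -> partitive E M ->
  (forall v, spanned E e v) -> (color_class E e (a,b) \/ color_class E e (b,a)) ->
  M a -> M b -> forall v, M v.
Proof.
intros HU HM Hsp Hc Ha Hb v.
destruct (spanned_all V E (fun p => M (fst p) /\ M (snd p)) HU) with (e:=e) (a:=a) (b:=b) (v:=v)
  as [w [Hv _]]; auto.
- intros [p1 p2] [q1 q2] [H1 [H2 [[Heq H3]|[Heq H3]]]] [Mp1 Mp2]; simpl in *; subst.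
  + split; auto. destruct (classic (M q2)) as [|Hn]; auto. exfalso.
    destruct (HM _ _ _ Mp1 Mp2 Hn) as [Hl _]. apply H3; apply Hl; auto.
  + split; auto. destruct (classic (M q1)) as [|Hn]; auto. exfalso.
    destruct (HM _ _ _ Mp1 Mp2 Hn) as [_ Hl]. apply H3. apply (proj2 HU). apply Hl; auto.
- intros a0 b0 [H1 H2]; split; auto.
Qed.

Lemma union_part V E (P Y : V -> Prop) : partitive E P -> partitive E Y ->
  (exists z, P z /\ Y z) -> partitive E (fun v => P v \/ Y v).
Proof.
intros HP HY [z [Pz Yz]] a b c Ha Hb Hc.
assert (nP : ~ P c) by tauto. assert (nY : ~ Y c) by tauto.
destruct Ha as [Ha|Ha]; destruct Hb as [Hb|Hb].
- apply HP; auto.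
- destruct (HP a z c) as [A1 A2]; auto. destruct (HY z b c) as [B1 B2]; auto. tauto.
- destruct (HY a z c) as [A1 A2]; auto. destruct (HP z b c) as [B1 B2]; auto. tauto.
- apply HY; auto.
Qed.

Lemma big_union V E (x y : V) :
  partitive E (fun v => exists N, partitive E N /\ N x /\ ~ N y /\ N v).
Proof.
intros a b c [N1 [H1 [x1 [y1 a1]]]] [N2 [H2 [x2 [y2 b2]]]] Hc.
assert (n1 : ~ N1 c) by (intro; apply Hc; exists N1; auto).
assert (n2 : ~ N2 c) by (intro; apply Hc; exists N2; auto).
destruct (H1 a x c) as [A1 A2]; auto. destruct (H2 x b c) as [B1 B2]; auto. tauto.
Qed.

Theorem lemma3p8 (V : Type) (E : V -> V -> Prop) :
  undirected E ->
  (exists x y z : V, x <> y /\ x <> z /\ y <> z) ->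
  decomposable E ->
  (exists e : V * V, E (fst e) (snd e) /\ forall x, spanned E e x) ->
  exists X : V -> Prop,
    strong_partitive E X /\
    (exists x y, x <> y /\ X x /\ X y) /\
    (exists v, ~ X v) /\
    (forall Y : V -> Prop, strong_partitive E Y -> (exists v, ~ Y v) ->
       (forall x, X x -> Y x) -> forall x, Y x -> X x).
Proof.
intros HU _ [M [HM HMnt]] [e [He Hsp]].
assert (Hex : exists x, M x).
{ apply NNPP; intro H. apply HMnt; left; intros x Hx; apply H; eauto. }
assert (Hv0 : exists v, ~ M v).
{ apply NNPP; intro H. apply HMnt; right; right; intro x. apply NNPP; intro; apply H; eauto. }
destruct Hex as [x Mx]. destruct Hv0 as [v0 Mv0].
assert (Hx' : exists x', x' <> x /\ M x').
{ apply NNPP; intro H. apply HMnt; right; left; exists x; intros y; split.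
  - intros My. apply NNPP; intro; apply H; eauto.
  - intros ->; auto. }
destruct Hx' as [x' [Hxx' Mx']].
destruct (Hsp x) as [y Hc].
assert (Hc2 : color_class E e (x,y) \/ color_class E e (y,x)) by tauto.
assert (Exy : E x y).
{ destruct Hc as [H|H]; destruct (color_edge V E e _ _ He H); auto; apply (proj2 HU); auto. }
assert (My : ~ M y).
{ intro My. apply Mv0. eapply (module_full V E M e x y); eauto. }
set (P := fun v => exists N, partitive E N /\ N x /\ ~ N y /\ N v).
assert (HP : partitive E P) by apply big_union.
assert (Px : P x) by (exists M; auto).
assert (nPy : ~ P y) by (intros [N [_ [_ [Hn Ny]]]]; auto).
exists P. split; [split; [exact HP|] | split; [|split]].
- intros Y HY [z [Pz Yz]].
  destruct (classic (Y y)) as [Yy|nYy].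
  + left. destruct (classic (Y x)) as [Yx|nYx].
    * intros v _. apply (module_full V E Y e x y); auto.
    * exfalso.
      assert (Hfull : forall v, P v \/ Y v).
      { apply (module_full V E (fun v => P v \/ Y v) e x y); auto.
        apply union_part; eauto. }
      assert (Hout : forall b, ~ P b -> E x b).
      { intros b Hb. assert (Yb : Y b) by (destruct (Hfull b); tauto).
        destruct (HY b y x) as [_ B]; auto. apply B; auto. }
      assert (H1 : forall a b, P a -> ~ P b -> E a b).
      { intros a b Pa Pb. destruct (HP a x b) as [A _]; auto. apply A; auto. }
      assert (H2 : forall a b, P a -> ~ Y a -> P b -> Y b -> E a b).
      { intros a b Pa Ya Pb Yb. destruct (HY b y a) as [_ B]; auto. apply B.
        destruct (HP a x y) as [A _]; auto; apply A; auto. }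
      set (S1 := fun a => P a /\ ~ Y a). set (S2 := fun a => ~ P a).
      assert (K1 : forall a b, ~ E a b -> S1 a -> S1 b).
      { intros a b Hab [Pa Ya]. apply NNPP; intro Hb. apply Hab.
        destruct (classic (P b)) as [Pb|Pb].
        - apply H2; auto. apply NNPP; intro; apply Hb; split; auto.
        - apply H1; auto. }
      assert (K2 : forall a b, ~ E a b -> S2 a -> S2 b).
      { intros a b Hab Pa. intro Pb. apply Hab. apply (proj2 HU). apply H1; auto. }
      destruct (spanned_all V E (fun p => (S1 (fst p) /\ S2 (snd p)) \/ (S2 (fst p) /\ S1 (snd p))) HU)
        with (e:=e) (a:=x) (b:=y) (v:=z) as [w Hw]; auto.
      -- intros [p1 p2] [q1 q2] [G1 [G2 [[Heq G3]|[Heq G3]]]]; simpl in *; subst.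
         ++ intros [[A B]|[A B]]; [left|right]; split; auto; [eapply K2|eapply K1]; eauto.
         ++ assert (G3' : ~ E q1 p1) by (intro; apply G3; apply (proj2 HU); auto).
            intros [[A B]|[A B]]; [left|right]; split; auto; [eapply K1|eapply K2]; eauto.
      -- intros a b; simpl; tauto.
      -- simpl. left. split; [split; auto|]; exact nPy.
      -- simpl in Hw. unfold S1, S2 in Hw. tauto.
  + right. intros v Yv. exists (fun u => P u \/ Y u). split; [|split; [|split]]; auto.
    * apply union_part; eauto.
    * tauto.
- exists x, x'. split; auto. split; auto. exists M; auto.
- exists y; auto.
- intros Y [HY _] [v Hv] Hsub u Yu.
  assert (Yx : Y x) by auto.
  assert (nYy : ~ Y y).
  { intro Yy. apply Hv. apply (module_full V E Y e x y); auto. }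
  exists Y; auto.
Qed.
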